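(* Let $G$ be a finite group with $K(G)>1$ and $Z_2>Z(G)$, and write $K=K(G)$. Then the following are equivalent: (1) $Z_K>Z(G)$; (2) there exists $g\in G$ with $[g,G]=K$; (3) $K=[Z_K,G]$.
   Context: For $\chi\in\mathrm{Irr}(G)$, the center of $\chi$ is $Z(\chi)=\{g\in G : |\chi(g)|=\chi(1)\}$. For a nonabelian group $G$, let $\mathcal{X}=\{\chi\in\mathrm{Irr}(G) : Z(\chi)>Z(G)\}$ (strict containment) and define $K(G)=\bigcap_{\chi\in\mathcal{X}}\ker(\chi)$; if $G$ is abelian, set $K(G)=G$. $Z_2$ is defined by $Z_2/Z(G)=Z(G/Z(G))$; for a normal subgroup $N$, $Z_N$ is defined by $Z_N/N=Z(G/N)$. For $g\in G$, $[g,G]$ is the subgroup generated by $\{[g,x]:x\in G\}$. *)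

(* Defs.v *)
From mathcomp Require Import all_boot all_order all_algebra all_fingroup all_solvable all_field all_character.
Set Implicit Arguments. Unset Strict Implicit. Unset Printing Implicit Defensive.
Import GroupScope GRing.Theory Num.Theory.
Local Open Scope ring_scope.

(* Z(chi) is mathcomp's cfcenter: [set g in G | `|chi g| == chi 1] for a character chi. *)

(* K(G) = intersection of ker chi over irreducible chi with Z(G) < Z(chi);
   K(G) = G if G is abelian. (Intersection taken inside G, so empty family gives G.) *)
Definition KG (gT : finGroupType) (G : {group gT}) : {set gT} :=
  if abelian G then G
  else (G :&: \bigcap_(i : Iirr G | 'Z(G) \proper ('Z('chi_i))%CF) cfker 'chi[G]_i)%g.

Definition ZN (gT : finGroupType) (G N : {group gT}) : {set gT} :=
  (coset N @*^-1 'Z(G / N))%g.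

Definition commg_elt (gT : finGroupType) (g : gT) (G : {set gT}) : {set gT} :=
  (<<[set [~ g, x] | x in G]>>)%g.

(* Main.v *)
Require Import Defs.
From mathcomp Require Import all_boot all_order all_algebra all_fingroup all_solvable all_field all_character.
Import GroupScope.

Lemma ZN_memE {gT : finGroupType} {G H : {group gT}} :
  H <| G -> ZN G H = [set x in G | [~: [set x], G] \subset H].
Proof.
move=> nsHG; have nHG := normal_norm nsHG.
have sZG: ZN G H \subset G.
  by rewrite /ZN -{2}(quotientGK nsHG) morphpreS // center_sub.
apply/setP=> x; rewrite -(setIidPr sZG) [LHS]inE [RHS]inE /ZN.
case Gx: (x \in G) => //=.
rewrite -sub1set -sub_quotient_pre -?quotient_cents2 ?sub1set ?(subsetP nHG) //.
by rewrite subsetI quotientS ?sub1set.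
Qed.

Lemma commg_eltE (gT : finGroupType) (g : gT) (G : {set gT}) :
  commg_elt g G = [~: [set g], G].
Proof.
rewrite /commg_elt; congr <<_>>; apply/setP=> y.
apply/imsetP/imset2P => [[x Gx ->]|[a x /set1P -> Gx ->]].
  by exists g x; rewrite ?set11.
by exists x.
Qed.

Lemma key_sub (gT : finGroupType) (G : {group gT}) (g : gT) :
  g \in G -> g \notin 'Z(G) ->
  (G :&: \bigcap_(i : Iirr G | 'Z(G) \proper ('Z(('chi_i)%R))%CF) cfker ('chi[G]_i)%R)%g
    \subset [~: [set g], G].
Proof.
move=> Gg nZg.
have nsNG : [~: [set g], G] <| G.
  by rewrite /normal comm_subG ?sub1set // commg_normr.
rewrite -(cap_cfker_normal nsNG); apply/bigcapsP => i sNker.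
apply: subset_trans (subsetIr _ _) _; apply: bigcap_inf.
have gZ : g \in ('Z(('chi_i)%R))%CF.
  rewrite -(quotientGK (cfker_center_normal _)) cfcenter_eq_center.
  have E := @ZN_memE _ G (cfker_group ('chi_i)%R) (cfker_normal _).
  rewrite /ZN in E; rewrite E inE Gg /=.
  exact: subset_trans sNker.
rewrite properE; apply/andP; split.
  by rewrite -cap_cfcenter_irr (bigcap_inf i).
by apply/negP => sub; case/negP: nZg; apply: (subsetP sub).
Qed.

Theorem lemma3p6 (gT : finGroupType) (G K : {group gT}) :
  K :=: KG G ->
  K :!=: 1 ->
  'Z(G) \proper 'Z_2(G) ->
  (('Z(G) \proper ZN G K) <-> (exists2 g, g \in G & commg_elt g G = K)) /\
  ((exists2 g, g \in G & commg_elt g G = K) <-> (K :=: [~: ZN G K, G])).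
Proof.
move=> defK ntK ZZ2.
have nabG : ~~ abelian G.
  apply/negP=> abG; move: ZZ2; rewrite (center_idP abG) properE.
  by rewrite ucn_sub andbF.
have defK' : K :=: (G :&: \bigcap_(i : Iirr G | 'Z(G) \proper ('Z(('chi_i)%R))%CF) cfker ('chi[G]_i)%R)%g.
  by rewrite defK /KG (negbTE nabG).
have nsKG : K <| G.
  rewrite /normal {1}defK' subsetIl /= defK' normsI ?normG //.
  by apply: norms_bigcap; apply/bigcapsP => i _; apply: cfker_norm.
have keyK g : g \in G -> g \notin 'Z(G) -> K \subset [~: [set g], G].
  by move=> Gg nZg; rewrite defK' key_sub.
have ZNE := ZN_memE nsKG.
have cent1 z : z \in 'Z(G) -> [~: [set z], G] = 1.
  move=> Zz; apply/commG1P; rewrite sub1set.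
  by case/setIP: Zz.
have subZ : 'Z(G) \subset ZN G K.
  apply/subsetP=> z Zz; rewrite ZNE inE (subsetP (center_sub G)) //=.
  by rewrite cent1 ?sub1G.
have e12 : ('Z(G) \proper ZN G K) <-> (exists2 g, g \in G & commg_elt g G = K).
  split.
    case/properP => _ [g]; rewrite ZNE inE => /andP[Gg sgK] nZg.
    exists g => //; rewrite commg_eltE; apply/eqP; rewrite eqEsubset sgK.
    exact: keyK.
  case=> g Gg; rewrite commg_eltE => defg.
  apply/properP; split => //; exists g.
    by rewrite ZNE inE Gg defg subxx.
  apply/negP => Zg; move: ntK; rewrite -defg cent1 // eqxx.
  by [].
split => //; split.
  case=> g Gg; rewrite commg_eltE => defg.
  apply/eqP; rewrite eqEsubset; apply/andP; split.
    rewrite -defg; apply: commgSS (subxx _); rewrite sub1set ZNE inE Gg defg.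
    exact: subxx.
  rewrite gen_subG; apply/subsetP => _ /imset2P[x y Zx Gy ->].
  move: Zx; rewrite ZNE inE => /andP[_ sxK].
  by apply: (subsetP sxK); apply: mem_commg; rewrite ?set11.
move=> defK3; apply/e12; rewrite properE subZ /=.
apply/negP => sZkZ; move: ntK; rewrite defK3.
have -> : [~: ZN G K, G] = 1.
  apply/commG1P; apply: subset_trans sZkZ _; exact: subsetIr.
by rewrite eqxx.
Qed.
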